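(* For positive integers $m$ and $n$, \[ \overline{{m+n+1 \brack m+1}}_{q,t} =1 + \sum_{j=1}^{n} q^{j} \left( \overline{{m+j \brack j}}_{q,t} + t\, \overline{{m+j-1 \brack j-1}}_{q,t} \right). \]
   Context: An overpartition is a partition in which the last occurrence of each distinct part size may be overlined; its weight $|\lambda|$ is the sum of its parts. For integers $0\le b\le a$, $\overline{{a \brack b}}_{q,t}=\sum_{\lambda} t^{\#_o(\lambda)} q^{|\lambda|}$, the sum over all overpartitions $\lambda$ with largest part at most $a-b$ and at most $b$ parts, $\#_o(\lambda)$ being the number of overlined parts. *)

(* Defs.v *)
From mathcomp Require Import all_boot all_order all_algebra.
Set Implicit Arguments. Unset Strict Implicit. Unset Printing Implicit Defensive.
Import GRing.Theory.
Local Open Scope ring_scope.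

(* An overpartition is encoded as the list of its parts in nonincreasing
   order, each part paired with a boolean "is overlined".  Only the last
   occurrence of each distinct part size may be overlined. *)
Fixpoint overline_ok (s : seq (nat * bool)) : bool :=
  match s with
  | [::] => true
  | x :: s' =>
      (x.2 ==> (match s' with [::] => true | y :: _ => y.1 != x.1 end))
      && overline_ok s'
  end.

Definition is_overpartition (s : seq (nat * bool)) : bool :=
  [&& sorted (fun x y : nat * bool => y.1 <= x.1)%N s,
      all (fun x : nat * bool => 0 < x.1)%N s & overline_ok s].

Definition op_weight (s : seq (nat * bool)) : nat := sumn (map fst s).
Definition op_noverlined (s : seq (nat * bool)) : nat := count snd s.

(* overline{[a, b]}_{q,t}: sum over overpartitions with largest part at most
   a - b and at most b parts (i.e. exactly k parts, k = 0..b), of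
   t^{#overlined} q^{weight}. *)
Definition op_seq (N k : nat) (s : k.-tuple ('I_N.+1 * bool)) : seq (nat * bool) :=
  map (fun x => (val x.1, x.2)) s.

Definition obinom (R : comNzRingType) (a b : nat) (q t : R) : R :=
  \sum_(k < b.+1)
    \sum_(s : k.-tuple ('I_(a - b).+1 * bool) | is_overpartition (op_seq s))
      t ^+ op_noverlined (op_seq s) * q ^+ op_weight (op_seq s).

(* Main.v *)
Require Import Defs.
From mathcomp Require Import all_boot all_order all_algebra.
From mathcomp Require Import ring zify.
Import GRing.Theory.
Local Open Scope ring_scope.

Section Work.
Variables (R : comNzRingType) (q t : R).

Fixpoint V (i N : nat) : R :=
  match i with
  | 0 => 1
  | i'.+1 => \sum_(p < N.+1 | (0 < p)%N) q ^+ p * (V i' p + t * V i' p.-1)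
  end.

Definition G (N k : nat) : R := \sum_(i < k.+1) V i N.

Lemma Vi0 i : V i.+1 0 = 0.
Proof. by apply: big_pred0 => -[[|p] hp]. Qed.

Lemma G0k k : G 0 k = 1.
Proof.
rewrite /G big_ord_recl /= big1 ?addr0 // => i _; exact: Vi0.
Qed.

Lemma GN0 N : G N 0 = 1.
Proof. by rewrite /G big_ord1. Qed.

Lemma VS i N : V i.+1 N.+1 = V i.+1 N + q ^+ N.+1 * (V i N.+1 + t * V i N).
Proof.
rewrite /= big_mkcond big_ord_recr /= -big_mkcond /=.
done.
Qed.

Lemma Grec1 N k : G N.+1 k.+1 = G N k.+1 + q ^+ N.+1 * (G N.+1 k + t * G N k).
Proof.
rewrite /G !(big_ord_recl k.+1).
have -> : \sum_(i < k.+1) V (lift ord0 i) N.+1 =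
  \sum_(i < k.+1) (V i.+1 N + q^+N.+1 * (V i N.+1 + t * V i N)).
  by apply: eq_bigr => i _; rewrite VS.
rewrite big_split mulrDr mulrA !mulr_sumr -!addrA.
congr (_ + (_ + _)); rewrite -big_split; apply: eq_bigr => i _; by rewrite mulrDr mulrA.
Qed.

Lemma useq (c l r a b : R) : l = r -> a - c * (l - r) = b -> a = b.
Proof. by move=> ->; rewrite subrr mulr0 subr0. Qed.
Arguments useq c {l r a b}.

Lemma G1k k : G 1 k.+1 = G 1 k + q ^+ k.+1 * (1 + t).
Proof.
elim: k => [|k IH].
  by rewrite Grec1 !G0k !GN0 mulr1.
have E0 := Grec1 0 k.+1; have E1 := Grec1 0 k.
rewrite !G0k in E0 E1.
apply: (useq 1 E0); apply: (useq q IH); apply: (useq (-1) E1).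
rewrite !exprS; ring.
Qed.

Lemma GN1 N : G N.+1 1 = 1 + q * (G N 1 + t).
Proof.
elim: N => [|N IH].
  by rewrite Grec1 !G0k !GN0 mulr1.
have E0 := Grec1 N.+1 0; have E1 := Grec1 N 0.
rewrite !GN0 in E0 E1.
apply: (useq 1 E0); apply: (useq 1 IH); apply: (useq (-q) E1).
rewrite !exprS; ring.
Qed.

Lemma Grec2 N k : G N.+1 k.+1 = G N.+1 k + q ^+ k.+1 * (G N k.+1 + t * G N k).
Proof.
elim: N k => [|N IHN] k.
  by rewrite G1k !G0k mulr1.
elim: k => [|k IHk].
  by rewrite GN1 !GN0 expr1 mulr1.
have def1 := Grec1 N.+1 k.+1; have def2 := Grec1 N.+1 k.
have cN1 := IHN k.+1; have cN0 := IHN k.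
have def3 := Grec1 N k.+1; have def4 := Grec1 N k.
apply: (useq 1 def1); apply: (useq (-1) def2); apply: (useq 1 cN1).
apply: (useq (q ^+ N.+2) IHk); apply: (useq (t * q ^+ N.+2) cN0).
apply: (useq (- q ^+ k.+2) def3); apply: (useq (- (t * q ^+ k.+2)) def4).
rewrite !exprS; ring.
Qed.

Lemma Gsym n : forall N k, (N + k <= n)%N -> G N k = G k N.
Proof.
elim: n => [|n IH] [|N] [|k] //= h; rewrite ?G0k ?GN0 //.
rewrite [LHS]Grec1 [RHS]Grec2 (IH N k.+1) ?(IH N.+1 k) ?(IH N k) //;
  lia.
Qed.

Definition wt (s : seq (nat * bool)) : R :=
  t ^+ op_noverlined s * q ^+ op_weight s.

Definition W M N i :=
  \sum_(s : i.-tuple ('I_M.+1 * bool) | is_overpartition (op_seq s) &&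
          all (fun x => (x.1 <= N)%N) (op_seq s)) wt (op_seq s).

Lemma all_le_head (y c : nat) (s : seq (nat * bool)) :
  all (fun z => (z.1 <= y)%N) s ->
  ((y <= c)%N && all (fun z => (z.1 <= c)%N) s) = (y <= c)%N.
Proof.
move=> hA; case: (leqP y c) => //= hyc.
apply/allP => z hz; exact: leq_trans (allP hA z hz) hyc.
Qed.

Lemma is_op_cons (x : nat * bool) s N :
  is_overpartition (x :: s) && all (fun y => (y.1 <= N)%N) (x :: s) =
  [&& (0 < x.1)%N, (x.1 <= N)%N, is_overpartition s &
      all (fun y => (y.1 <= x.1 - x.2)%N) s].
Proof.
case: x => p b; case: s => [|[y c] s].
  rewrite /is_overpartition /=; by case: b; case: (0 < p)%N; case: (p <= N)%N.
rewrite /is_overpartition /=.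
case hp: (path _ (y, c) s); last by rewrite !(andbF, andFb).
have hA : all (fun z : nat * bool => (z.1 <= y)%N) s.
  have := order_path_min _ hp; apply.
  by move=> [a1 a2] [b1 b2] [c1 c2] /= h1 h2; exact: leq_trans h2 h1.
have le1 : forall c0, (y <= c0)%N -> all (fun z : nat * bool => (z.1 <= c0)%N) s = true.
  by move=> c0 hc; apply/allP => z hz; exact: leq_trans (allP hA z hz) hc.
case: (leqP y N) => hyN; [rewrite (le1 N hyN)|];
  (case: (leqP y (p - b)) => hyb; [rewrite (le1 _ hyb)|]);
  case: b hyb => /= hyb; lia.
Qed.

Lemma big_tuple_cons (T : finType) i (P : pred (i.+1.-tuple T))
    (F : i.+1.-tuple T -> R) :
  \sum_(s | P s) F s =
  \sum_(x : T) \sum_(s : i.-tuple T | P (cons_tuple x s)) F (cons_tuple x s).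
Proof.
rewrite pair_big_dep /=.
rewrite (reindex (fun p : T * i.-tuple T => cons_tuple p.1 p.2)) /=.
  by apply: eq_bigl => -[x s].
exists (fun s => (thead s, behead_tuple s)) => [[x s] _ | s _].
  by congr pair; apply: val_inj.
by rewrite [RHS]tuple_eta.
Qed.

Lemma opc M (x : 'I_M.+1 * bool) i (s : i.-tuple ('I_M.+1 * bool)) :
  op_seq (cons_tuple x s) = (val x.1, x.2) :: op_seq s.
Proof. by []. Qed.

Lemma WS M N i : W M N i.+1 =
  \sum_(x : 'I_M.+1 * bool | (0 < x.1 <= N)%N)
     t ^+ x.2 * q ^+ x.1 * W M (x.1 - x.2) i.
Proof.
rewrite /W big_tuple_cons [RHS]big_mkcond; apply: eq_bigr => -[p b] _ /=.
case: ifP => h.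
  rewrite mulr_sumr; apply: eq_big => s.
    move/andP: h => [h1 h2]; by rewrite opc is_op_cons /= h1 h2.
  move=> _; rewrite opc /wt /op_noverlined /op_weight /= !exprD; ring.
apply: big_pred0 => s; by rewrite opc is_op_cons andbA /= h.
Qed.

Lemma W0 M N : W M N 0 = 1.
Proof.
rewrite /W (eq_bigl (pred1 [tuple])) ?big_pred1_eq; first by rewrite /wt /= mulr1.
by move=> s; rewrite [s]tuple0 /=; symmetry; apply/eqP.
Qed.

Lemma VSdef i N :
  V i.+1 N = \sum_(p < N.+1 | (0 < p)%N) q ^+ p * (V i p + t * V i p.-1).
Proof. by []. Qed.

Lemma WV M N i : (N <= M)%N -> W M N i = V i N.
Proof.
elim: i N => [|i IH] N hN; first by rewrite W0.
rewrite WS (eq_bigr (fun x : 'I_M.+1 * bool => t ^+ x.2 * q ^+ x.1 * V i (x.1 - x.2))); last first.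
  move=> x /andP[_ hx]; rewrite IH //; lia.
have -> : \sum_(x : 'I_M.+1 * bool | (0 < x.1 <= N)%N)
            t ^+ x.2 * q ^+ x.1 * V i (x.1 - x.2) =
          \sum_(p : 'I_M.+1 | (0 < p <= N)%N) \sum_(b : bool)
            t ^+ b * q ^+ p * V i (p - b).
  rewrite (pair_big_dep (fun p : 'I_M.+1 => (0 < p <= N)%N) (fun _ _ => true)
     (fun (p : 'I_M.+1) (b : bool) => t ^+ b * q ^+ p * V i (p - b))).
  by apply: eq_bigl => -[p b]; rewrite andbT.
rewrite VSdef (@big_ord_widen_cond _ _ _ N.+1 M.+1 (fun p => (0 < p)%N)
   (fun p => q ^+ p * (V i p + t * V i p.-1)) hN) /=.
apply: eq_big => p; first by rewrite ltnS.
move=> _; rewrite big_bool /= subn0 subn1 expr1 expr0; ring.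
Qed.

Lemma obinomG N k : obinom (N + k) k q t = G N k.
Proof.
rewrite /obinom addnK /G; apply: eq_bigr => i _.
rewrite -(WV N N i (leqnn N)) /W; apply: eq_bigl => s.
rewrite [X in _ = _ && X](_ : _ = true) ?andbT //.
apply/allP => -[a b] /mapP [[x c] _ [-> _]] /=.
by rewrite -ltnS ltn_ord.
Qed.

End Work.

Theorem proposition4p1 (R : comNzRingType) (q t : R) (m n : nat)
  (hm : (0 < m)%N) (hn : (0 < n)%N) :
  obinom (m + n + 1) (m + 1) q t =
  1 + \sum_(1 <= j < n.+1)
        q ^+ j * (obinom (m + j) j q t + t * obinom (m + j - 1) (j - 1) q t).
Proof.
rewrite (_ : (m + n + 1 = n + (m + 1))%N); last by lia.
rewrite obinomG.
rewrite (eq_big_nat _ _ (F2 := fun j => q ^+ j * (G R q t j m + t * G R q t (j - 1) m)));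
  last first.
  move=> j /andP[hj _].
  rewrite (_ : (m + j - 1 = m + (j - 1))%N); last by lia.
  by rewrite !obinomG (@Gsym R q t _ m j (leqnn _)) (@Gsym R q t _ m (j - 1) (leqnn _)).
clear hn; elim: n => [|n IH].
  by rewrite big_geq // G0k addr0.
rewrite big_nat_recr //= addrA -IH !addn1 Grec1 subn1 /=.
done.
Qed.
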